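(* For all integers $\alpha\ge2$, $0\le m\le\alpha$ and $n\in\mathbb Z$, $$C_{\alpha,m,n}=C_{\alpha-1,m,n}+y_{2\alpha-1,n}\,C_{\alpha-1,m-1,n}+y_{2\alpha-2,n}\,C_{\alpha-2,m-1,n}.$$ Moreover $C_{\alpha,0,n}=1$ for all $\alpha\ge0$.
   Context: Let $(r_{1,n})_{n\in\mathbb Z}$ be a sequence in a field $K$, set $r_{0,n}=1$ and $r_{\alpha,n}=\det_{1\le i,j\le\alpha}(r_{1,n+i+j-1-\alpha})$ for $\alpha\ge1$, and assume all $r_{\alpha,n}$ are nonzero. For $p\ge0$ let $s_p(j)=j$ if $j\le p$ and $s_p(j)=j+1$ if $j>p$; for $\alpha\ge1$, $0\le m\le \alpha$ let $c_{\alpha,m,n}=\det_{1\le i,j\le\alpha}(r_{1,n+i+s_{\alpha-m}(j)-\alpha-1})$, $c_{0,0,n}=1$, and $c_{\alpha,m,n}=0$ if $m<0$ or $m>\alpha$. Define $v_{\alpha,n}=r_{\alpha,n}/r_{\alpha-1,n}$ ($\alpha\ge1$), the weights $$y_{2\alpha-1,n}=\frac{v_{\alpha,n+1}}{v_{\alpha,n}}=\frac{r_{\alpha-1,n}r_{\alpha,n+1}}{r_{\alpha,n}r_{\alpha-1,n+1}},\qquad y_{2\alpha,n}=\frac{v_{\alpha+1,n+1}}{v_{\alpha,n}}=\frac{r_{\alpha-1,n}r_{\alpha+1,n+1}}{r_{\alpha,n}r_{\alpha,n+1}}\quad(\alpha\ge1),$$ and $C_{\alpha,m,n}=c_{\alpha,m,n}/(v_{1,n}v_{2,n}\cdots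 v_{\alpha,n})$ (with $C_{0,0,n}=1$ and $C_{\alpha,m,n}=0$ if $m<0$ or $m>\alpha$). *)

(* Defs.v *)
From HB Require Import structures.
From mathcomp Require Import all_boot all_order all_algebra.
Set Implicit Arguments. Unset Strict Implicit. Unset Printing Implicit Defensive.
Import Order.TTheory GRing.Theory Num.Theory.
Local Open Scope ring_scope.

Section Defs.
Variable K : fieldType.
Variable r1 : int -> K.

(* r_{a,n} = det_{1<=i,j<=a} r1(n+i+j-1-a); with 0-based i',j' : n+i'+j'+1-a.
   For a = 0 this is the empty determinant, i.e. 1. *)
Definition rdet (a : nat) (n : int) : K :=
  \det (\matrix_(i < a, j < a) r1 (n + (i : nat)%:Z + (j : nat)%:Z + 1 - a%:Z)).

Definition sp (p j : nat) : nat := if (j <= p)%N then j else j.+1.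

(* c_{a,m,n} = det_{1<=i,j<=a} r1(n+i+s_{a-m}(j)-a-1), zero if m<0 or m>a.
   0-based: i = i'+1, j = j'+1, giving n + i' + s_{a-m}(j'+1) - a. *)
Definition cdet (a : nat) (m : int) (n : int) : K :=
  if (0 <= m) && (m <= a%:Z) then
    \det (\matrix_(i < a, j < a)
            r1 (n + (i : nat)%:Z + (sp (a - `|m|%N) (j : nat).+1)%:Z - a%:Z))
  else 0.

Definition vv (a : nat) (n : int) : K := rdet a n / rdet a.-1 n.

(* y_{2a-1,n} = v_{a,n+1}/v_{a,n},  y_{2a,n} = v_{a+1,n+1}/v_{a,n}  (a >= 1) *)
Definition yy (k : nat) (n : int) : K :=
  if odd k then vv k.+1./2 (n + 1) / vv k.+1./2 n
  else vv k./2.+1 (n + 1) / vv k./2 n.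

Definition CC (a : nat) (m : int) (n : int) : K :=
  cdet a m n / \prod_(1 <= i < a.+1) vv i n.

End Defs.

(* Main.v *)
Require Import Defs.
From HB Require Import structures.
From mathcomp Require Import all_boot all_order all_algebra.
From mathcomp Require Import fingroup perm.
From Stdlib Require Import Lia.
Set Implicit Arguments. Unset Strict Implicit. Unset Printing Implicit Defensive.
Import Order.TTheory GRing.Theory Num.Theory.
Local Open Scope ring_scope.

Section Pl.
Variable K : fieldType.

Definition rep n (M : 'M[K]_n) (j : 'I_n) (v : 'rV[K]_n) : 'M[K]_n :=
  \matrix_(i, k) if i == j then v 0 k else M i k.

Lemma det_rep n (M : 'M[K]_n) j v :
  \det (rep M j v) = \sum_k v 0 k * cofactor M j k.
Proof.
rewrite (expand_det_row _ j); apply: eq_bigr => k _.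
rewrite mxE eqxx; congr (_ * _).
rewrite /cofactor; congr (_ * \det _).
apply/matrixP => i l; rewrite !mxE.
by have /negbTE -> : lift j i != j by rewrite eq_sym neq_lift.
Qed.

Lemma det_mx22 (P : 'M[K]_2) : \det P = P 0 0 * P 1 1 - P 0 1 * P 1 0.
Proof.
rewrite (expand_det_row _ 0) big_ord_recl big_ord1 /cofactor !det_mx11 !mxE /=.
rewrite expr0 expr1 mul1r mulN1r mulrN.
have -> : lift 0 (0 : 'I_1) = 1 :> 'I_2 by apply: val_inj.
have -> : lift 1 (0 : 'I_1) = 0 :> 'I_2 by apply: val_inj.
by [].
Qed.

Lemma plucker_core n (M : 'M[K]_(2 + n)) (z w : 'rV[K]_(2 + n)) :
  \det M != 0 ->
  let i0 := lshift n (0 : 'I_2) in let i1 := lshift n (1 : 'I_2) in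
  \det M * \det (rep (rep M i0 z) i1 w)
  = \det (rep M i0 z) * \det (rep M i1 w) - \det (rep M i1 z) * \det (rep M i0 w).
Proof.
move=> dM i0 i1.
set d := \det M.
pose Z : 'M[K]_(2, 2 + n) := \matrix_(i, k) if i == 0 then z 0 k else w 0 k.
have EN : rep (rep M i0 z) i1 w = col_mx Z (dsubmx M).
  apply/matrixP => i k.
  case: (splitP (i : 'I_(2 + n))) => [i' Hi | i' Hi].
    have -> : i = lshift n i' by apply: val_inj.
    clear Hi.
    rewrite col_mxEu !mxE /i1 /i0 (inj_eq (@lshift_inj _ _)).
    have [->|->] : i' = 0 \/ i' = 1.
      by case: i' => [[|[|?]] ?] //; [left|right]; apply: val_inj.
      by rewrite (inj_eq (@lshift_inj _ _)).
    by [].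
  have -> : i = rshift 2 i' by apply: val_inj.
  clear Hi.
  rewrite col_mxEd !mxE /i1 /i0.
  case: eqP => [/(congr1 val) /= h|_]; first by move: h; rewrite /= addSn.
  case: eqP => [/(congr1 val) /= h|_]; first by move: h; rewrite /= addSn.
  by [].
pose X := Z *m \adj M.
have EP : col_mx Z (dsubmx M) *m \adj M = block_mx (lsubmx X) (rsubmx X) 0 (d%:M).
  rewrite mul_col_mx.
  have -> : dsubmx M *m \adj M = row_mx 0 d%:M.
    have := congr1 dsubmx (mul_mx_adj M).
    rewrite -{1}(vsubmxK M) mul_col_mx col_mxKd => ->.
    by rewrite (scalar_mx_block 2 n) block_mxEv col_mxKd.
  by rewrite block_mxEv hsubmxK.
have H1 : \det (col_mx Z (dsubmx M)) * \det (\adj M) = \det (lsubmx X) * d ^+ n.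
  by rewrite -det_mulmx EP det_ublock det_scalar.
have H2 : d * \det (\adj M) = d ^+ (2 + n).
  by rewrite -det_mulmx mul_mx_adj det_scalar.
have HP : \det (lsubmx X) = \det (rep M i0 z) * \det (rep M i1 w) - \det (rep M i1 z) * \det (rep M i0 w).
  rewrite det_mx22 !mxE !det_rep.
  have E : forall (i : 'I_2) (j : 'I_2),
      \sum_k Z i k * (\adj M) k (lshift n j)
        = \sum_k (if i == 0 then z 0 k else w 0 k) * cofactor M (lshift n j) k.
    by move=> i j; apply: eq_bigr => k _; rewrite !mxE.
  by rewrite !E /=.
rewrite EN -HP.
apply: (mulIf (expf_neq0 n.+1 dM)).
rewrite -/d [d * _]mulrC -mulrA -exprS.
change (d ^+ n.+2) with (d ^+ (2 + n)).
by rewrite -H2 mulrCA H1 mulrCA -exprS.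
Qed.

Lemma det_row_perm n (s : 'S_n) (A : 'M[K]_n) : \det (row_perm s A) = (-1) ^+ s * \det A.
Proof. by rewrite row_permE det_mulmx det_perm. Qed.

Lemma rep_perm n (s : 'S_n) (M : 'M[K]_n) i v :
  rep (row_perm s M) i v = row_perm s (rep M (s i) v).
Proof. by apply/matrixP => a b; rewrite !mxE (inj_eq perm_inj). Qed.

Definition Mat s (F : nat -> nat -> K) : 'M[K]_s := \matrix_(i, j) F i j.
Definition Rf (F : nat -> nat -> K) (j : nat) (v : nat -> K) :=
  fun i k => if i == j then v k else F i k.

Lemma Mat_Rf s F (J : 'I_s) v :
  Mat s (Rf F J v) = rep (Mat s F) J (\row_k v k).
Proof. by apply/matrixP => a b; rewrite !mxE. Qed.

Lemma plucker_mat s F (j1 : nat) z w : (0 < j1 < s.+2)%N ->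
  \det (Mat s.+2 F) != 0 ->
  \det (Mat s.+2 F) * \det (Mat s.+2 (Rf (Rf F 0 z) j1 w))
  = \det (Mat s.+2 (Rf F 0 z)) * \det (Mat s.+2 (Rf F j1 w))
    - \det (Mat s.+2 (Rf F j1 z)) * \det (Mat s.+2 (Rf F 0 w)).
Proof.
case/andP => j1p j1s dM.
pose J := Ordinal j1s.
pose i0 : 'I_(2 + s) := lshift s (0 : 'I_2).
pose i1 : 'I_(2 + s) := lshift s (1 : 'I_2).
pose sg : 'S_(2 + s) := tperm i1 J.
have s0 : sg i0 = i0.
  rewrite /sg tpermD //; apply/eqP => /(congr1 val) //=.
  by move=> h; move: j1p; rewrite h.
have s1 : sg i1 = J by rewrite /sg tpermL.
pose M : 'M[K]_(2 + s) := Mat s.+2 F.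
have dM' : \det (row_perm sg M) != 0.
  by rewrite det_row_perm mulf_neq0 // signr_eq0.
have := plucker_core (\row_k z k) (\row_k w k) dM'.
rewrite /= -/i0 -/i1 !rep_perm s0 s1 !det_row_perm.
have E0 : Mat s.+2 (Rf F 0 z) = rep M i0 (\row_k z k) by rewrite -Mat_Rf.
have E0w : Mat s.+2 (Rf F 0 w) = rep M i0 (\row_k w k) by rewrite -Mat_Rf.
have E1 : Mat s.+2 (Rf F j1 z) = rep M J (\row_k z k) by rewrite -Mat_Rf.
have E1w : Mat s.+2 (Rf F j1 w) = rep M J (\row_k w k) by rewrite -Mat_Rf.
have E2 : Mat s.+2 (Rf (Rf F 0 z) j1 w) = rep (rep M i0 (\row_k z k)) J (\row_k w k).
  by rewrite -E0 -Mat_Rf.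
rewrite E0 E0w E1 E1w E2 -/M.
set e := (-1) ^+ _.
have ee : e * e = 1 by rewrite /e -signr_addb addbb.
have g : forall x y : K, e * x * (e * y) = x * y.
  by move=> x y; rewrite mulrACA ee mul1r.
by rewrite !g.
Qed.

Lemma eq_Mat s F G : (forall i j, (i < s)%N -> (j < s)%N -> F i j = G i j) ->
  Mat s F = Mat s G.
Proof. by move=> h; apply/matrixP => i j; rewrite !mxE h. Qed.

Lemma unit_row s F (r q : nat) : (r < s.+1)%N -> (q < s.+1)%N ->
  (forall j, (j < s.+1)%N -> F r j = (j == q)%:R) ->
  \det (Mat s.+1 F) = (-1) ^+ (r + q) * \det (Mat s (fun i j => F (bump r i) (bump q j))).
Proof.
move=> rs qs hF.
rewrite (expand_det_row _ (Ordinal rs)) (bigD1 (Ordinal qs)) //= big1 ?addr0.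
  rewrite mxE hF // eqxx mul1r /cofactor /=; congr (_ * \det _).
  by apply/matrixP => i j; rewrite !mxE.
move=> j hj; rewrite mxE hF // .
have -> : ((j : nat) == q) = false.
  by apply/negbTE; move: hj; apply: contra => /eqP h; apply/eqP/val_inj.
by rewrite mul0r.
Qed.
End Pl.

Ltac nlia := repeat match goal with
 | H : is_true _ |- _ => first [apply (elimT ssrnat.leP) in H | apply (elimT ssrnat.ltP) in H
                                | apply (elimT eqP) in H | clear H]
 end; try apply (introT ssrnat.leP); try apply (introT ssrnat.ltP);
 unfold addn, subn, addn_rec, subn_rec in * ; lia.

Section Dom.
Variable K : fieldType.
Variable r1 : int -> K.
Variable n : int.
Variable k : nat.

Definition hh (t : nat) : K := r1 (n + t%:Z + 1 - (k.+2)%:Z).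
Definition H (i j : nat) := hh (i + j).
Definition ee (q : nat) := fun j : nat => ((j == q)%:R : K).
Definition FF := Rf H k.+2 (ee k.+2).

Ltac case_leq := match goal with |- context [leq ?x ?y] =>
   lazymatch y with context [leq _ _] => fail | _ =>
   lazymatch x with context [leq _ _] => fail | _ =>
   let h := fresh "h" in case: (leqP x y) => h end end end.

Ltac crush := intros; rewrite ?/FF /Rf /ee /H /bump /=;
  repeat (case_leq; rewrite ?add0n ?add1n);
  rewrite ?add0n ?add1n; repeat (let h := fresh "h" in case: eqP => h); rewrite /=; try (by exfalso; nlia);
  try (by congr hh; nlia); try by [].

Lemma sign_even m : (-1) ^+ (m + m) = 1 :> K.
Proof. by rewrite -signr_odd addnn odd_double. Qed.

Lemma D1 : \det (Mat k.+3 (Rf H k.+2 (ee k.+2))) = \det (Mat k.+2 H).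
Proof.
rewrite (@unit_row _ k.+2 _ k.+2 k.+2); try (by nlia); try (by crush).
rewrite sign_even mul1r; congr (\det _); apply: eq_Mat; crush.
Qed.

Definition QR := \det (Mat k.+2 H).
Definition QRp := \det (Mat k.+2 (fun i j => H i j.+1)).
Definition QR1 := \det (Mat k.+1 (fun i j => H i j.+1)).
Definition QR1p := \det (Mat k.+1 (fun i j => H i.+1 j.+1)).
Definition Qca p := \det (Mat k.+2 (fun i j => H i (bump p j))).
Definition Qc1m p := \det (Mat k.+1 (fun i j => H i (bump p j.+1))).
Definition Qc1m1 p := \det (Mat k.+1 (fun i j => H i.+1 (bump p j))).
Definition Qc2m1 p := \det (Mat k (fun i j => H i.+1 (bump p j.+1))).
Definition Qbe p := \det (Mat k.+1 (fun i j => H i.+1 (bump p j.+1))).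

Section R1.
Variable p : nat.
Hypothesis hp : (p <= k)%N.

Lemma D2 : \det (Mat k.+3 (Rf FF k.+2 (ee p.+1))) = - (-1) ^+ (k + p) * Qca p.+1.
Proof.
rewrite (@unit_row _ k.+2 _ k.+2 p.+1); try (by nlia); try (by crush).
rewrite !addSn !addnS !exprS !mulN1r opprK /Qca; congr (_ * \det _); apply: eq_Mat; crush.
Qed.

Lemma D3 : \det (Mat k.+3 (Rf FF k.+2 (ee 0))) = (-1) ^+ k * QRp.
Proof.
rewrite (@unit_row _ k.+2 _ k.+2 0); try (by nlia); try (by crush).
rewrite addn0 !exprS !mulN1r opprK /QRp; congr (_ * \det _); apply: eq_Mat; crush.
Qed.

Lemma D4 : \det (Mat k.+3 (Rf FF 0 (ee 0))) = QR1p.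
Proof.
rewrite (@unit_row _ k.+2 _ 0 0); try (by nlia); try (by crush).
rewrite expr0 mul1r (@unit_row _ k.+1 _ k.+1 k.+1);
  try (by nlia); try (by crush).
rewrite sign_even mul1r /QR1p; congr (\det _); apply: eq_Mat; crush.
Qed.

Lemma D5 : \det (Mat k.+3 (Rf FF 0 (ee p.+1))) = - (-1) ^+ p * Qc1m1 p.+1.
Proof.
rewrite (@unit_row _ k.+2 _ 0 p.+1); try (by nlia); try (by crush).
rewrite add0n exprS mulN1r (@unit_row _ k.+1 _ k.+1 k.+1);
  try (by nlia); try (by crush).
rewrite sign_even mul1r /Qc1m1; congr (_ * \det _); apply: eq_Mat; crush.
Qed.

Lemma D6 : \det (Mat k.+3 (Rf (Rf FF 0 (ee 0)) k.+2 (ee p.+1))) = - (-1) ^+ (k + p) * Qbe p.+1.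
Proof.
rewrite (@unit_row _ k.+2 _ 0 0); try (by nlia); try (by crush).
rewrite expr0 mul1r (@unit_row _ k.+1 _ k.+1 p);
  try (by nlia); try (by crush).
rewrite addSn exprS mulN1r /Qbe; congr (_ * \det _); apply: eq_Mat; crush.
Qed.

Lemma rel1 : QR != 0 -> QR * Qbe p.+1 = QR1p * Qca p.+1 - QRp * Qc1m1 p.+1.
Proof.
move=> hR.
have hF : \det (Mat k.+3 FF) != 0 by rewrite D1.
have pr : (0 < k.+2 < k.+3)%N by rewrite ltnSn.
have := @plucker_mat K k.+1 FF k.+2 (ee 0) (ee p.+1) pr hF.
rewrite D1 D2 D3 D4 D5 D6.
set s := (-1) ^+ (k + p).
have hs : (-1) ^+ k * - (-1) ^+ p = - s :> K by rewrite mulrN -exprD.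
rewrite mulrACA hs.
move=> E.
have s0 : - s != 0 by rewrite oppr_eq0 signr_eq0.
apply: (mulfI s0).
by rewrite mulrCA E mulrBr mulrCA (mulrCA (- s)).
Qed.
End R1.

Definition G2 := fun i j => H i j.+1.

Section R2.
Variable p : nat.
Hypothesis hp : (p <= k)%N.

Lemma E2 : \det (Mat k.+2 (Rf G2 k.+1 (ee k.+1))) = QR1.
Proof.
rewrite (@unit_row _ k.+1 _ k.+1 k.+1); try (by nlia); try (by crush).
rewrite sign_even mul1r /QR1; congr (\det _); apply: eq_Mat; crush.
Qed.

Lemma E3 : \det (Mat k.+2 (Rf G2 k.+1 (ee p))) = - (-1) ^+ (k + p) * Qc1m p.+1.
Proof.
rewrite (@unit_row _ k.+1 _ k.+1 p); try (by nlia); try (by crush).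
rewrite addSn exprS mulN1r /Qc1m; congr (_ * \det _); apply: eq_Mat; crush.
Qed.

Lemma E4 : \det (Mat k.+2 (Rf G2 0 (ee p))) = (-1) ^+ p * Qbe p.+1.
Proof.
rewrite (@unit_row _ k.+1 _ 0 p); try (by nlia); try (by crush).
rewrite add0n /Qbe; congr (_ * \det _); apply: eq_Mat; crush.
Qed.

Lemma E5 : \det (Mat k.+2 (Rf G2 0 (ee k.+1))) = - (-1) ^+ k * QR1p.
Proof.
rewrite (@unit_row _ k.+1 _ 0 k.+1); try (by nlia); try (by crush).
rewrite add0n exprS mulN1r /QR1p; congr (_ * \det _); apply: eq_Mat; crush.
Qed.

Lemma E6 : \det (Mat k.+2 (Rf (Rf G2 0 (ee p)) k.+1 (ee k.+1))) = (-1) ^+ p * Qc2m1 p.+1.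
Proof.
rewrite (@unit_row _ k.+1 _ 0 p); try (by nlia); try (by crush).
rewrite add0n (@unit_row _ k _ k k); try (by nlia); try (by crush).
rewrite sign_even mul1r /Qc2m1; congr (_ * \det _); apply: eq_Mat; crush.
Qed.

Lemma rel2 : QRp != 0 -> QRp * Qc2m1 p.+1 = Qbe p.+1 * QR1 - Qc1m p.+1 * QR1p.
Proof.
move=> hR.
have pr : (0 < k.+1 < k.+2)%N by rewrite ltnSn.
have := @plucker_mat K k G2 k.+1 (ee p) (ee k.+1) pr hR.
rewrite E2 E3 E4 E5 E6.
have hs : - (-1) ^+ (k + p) * - (-1) ^+ k = (-1) ^+ p :> K.
  by rewrite mulrNN -exprD addnC addnA exprD sign_even mul1r.
rewrite [X in _ = _ - X]mulrACA hs -mulrA -mulrBr.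
move=> E.
have s0 : (-1) ^+ p != 0 :> K by rewrite signr_eq0.
apply: (mulfI s0).
by rewrite mulrCA E mulrBr mulrCA.
Qed.
End R2.
End Dom.

Ltac case_leq := match goal with |- context [leq ?x ?y] =>
   lazymatch y with context [leq _ _] => fail | _ =>
   lazymatch x with context [leq _ _] => fail | _ =>
   let h := fresh "h" in case: (leqP x y) => h end end end.

Section Link.
Variable K : fieldType.
Variable r1 : int -> K.
Variable n : int.
Variable k : nat.

Lemma zE (m : int) (x y : nat) : m + x%:Z + y%:Z = m + (x + y)%:Z.
Proof. by rewrite PoszD addrA. Qed.

Lemma r1eq (m : int) (x y u v : nat) : (x + v = y + u)%N ->
  r1 (m + x%:Z - u%:Z) = r1 (m + y%:Z - v%:Z).
Proof.
move=> h; congr r1; rewrite -!addrA; congr (_ + _).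
rewrite -(addrKA (v%:Z) (x%:Z) (u%:Z)) -(addrKA (u%:Z) (y%:Z) (v%:Z)).
by rewrite -!PoszD h [(v + u)%N]addnC.
Qed.

Ltac ent := apply/matrixP => i j; rewrite !mxE ?zE; apply: r1eq;
  rewrite ?absz_nat /sp /bump; repeat (case_leq; rewrite ?add0n ?add1n); nlia.

Lemma L_R : rdet r1 k.+2 n = QR r1 n k.
Proof. rewrite /rdet /QR /Mat /H /hh; congr (\det _); ent. Qed.
Lemma L_Rp : rdet r1 k.+2 (n + 1) = QRp r1 n k.
Proof. rewrite /rdet /QRp /Mat /H /hh; congr (\det _); ent. Qed.
Lemma L_R1 : rdet r1 k.+1 n = QR1 r1 n k.
Proof. rewrite /rdet /QR1 /Mat /H /hh; congr (\det _); ent. Qed.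
Lemma L_R1p : rdet r1 k.+1 (n + 1) = QR1p r1 n k.
Proof. rewrite /rdet /QR1p /Mat /H /hh; congr (\det _); ent. Qed.

Section P.
Variable q : nat.
Hypothesis hq : (q <= k)%N.
Lemma L_ca : cdet r1 k.+2 (q.+1)%:Z n = Qca r1 n k (k - q).+1.
Proof.
rewrite /cdet ifT; last by rewrite lez_nat; apply/andP; split; [by [] | nlia].
rewrite /Qca /Mat /H /hh; congr (\det _); ent.
Qed.
Lemma L_c1m : cdet r1 k.+1 (q.+1)%:Z n = Qc1m r1 n k (k - q).+1.
Proof.
rewrite /cdet ifT; last by rewrite lez_nat; apply/andP; split; [by [] | nlia].
rewrite /Qc1m /Mat /H /hh; congr (\det _); ent.
Qed.
Lemma L_c1m1 : cdet r1 k.+1 q%:Z n = Qc1m1 r1 n k (k - q).+1.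
Proof.
rewrite /cdet ifT; last by rewrite lez_nat; apply/andP; split; [by [] | nlia].
rewrite /Qc1m1 /Mat /H /hh; congr (\det _); ent.
Qed.
Lemma L_c2m1 : cdet r1 k q%:Z n = Qc2m1 r1 n k (k - q).+1.
Proof.
rewrite /cdet ifT; last by rewrite lez_nat; apply/andP; split; [by [] | nlia].
rewrite /Qc2m1 /Mat /H /hh; congr (\det _); ent.
Qed.
End P.

Lemma L_top1 : cdet r1 k.+2 (k.+2)%:Z n = QRp r1 n k.
Proof.
rewrite /cdet ifT; last by rewrite lez_nat; apply/andP; split; [by [] | nlia].
rewrite /QRp /Mat /H /hh; congr (\det _); ent.
Qed.
Lemma L_top2 : cdet r1 k.+1 (k.+1)%:Z n = QR1p r1 n k.
Proof.
rewrite /cdet ifT; last by rewrite lez_nat; apply/andP; split; [by [] | nlia].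
rewrite /QR1p /Mat /H /hh; congr (\det _); ent.
Qed.
End Link.

Lemma L_zero (K : fieldType) (r1 : int -> K) a n : cdet r1 a 0 n = rdet r1 a n.
Proof.
rewrite /cdet lexx /= /rdet; congr (\det _).
apply/matrixP => i j; rewrite !mxE ?zE; apply: r1eq.
rewrite /= subn0 /sp; have := ltn_ord j; case_leq => // _; nlia.
Qed.

Section F.
Variable K : fieldType.
Lemma canc (x y z : K) : x != 0 -> (x * y) / (x * z) = y / z.
Proof. by move=> hx; rewrite invfM mulrACA divff // mul1r. Qed.

Lemma fin_alg (R R1 R1p R2 Rp ca c1m c1m1 c2m1 : K) : R != 0 -> R1 != 0 -> R1p != 0 -> R2 != 0 ->
 ca * R1 * R1p = c1m * R * R1p + R1 * Rp * c1m1 + R * Rp * c2m1 ->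
 ca / R = c1m / R1 + (Rp / R1p) / (R / R1) * (c1m1 / R1) + (Rp / R1p) / (R1 / R2) * (c2m1 / R2).
Proof.
move=> h h1 h1p h2 E.
have -> : (Rp / R1p) / (R / R1) * (c1m1 / R1) = (Rp * c1m1) / (R1p * R).
  by rewrite invf_div !mulf_div [Rp * R1]mulrC -[R1 * Rp * c1m1]mulrA [R1p * R * R1]mulrC canc.
have -> : (Rp / R1p) / (R1 / R2) * (c2m1 / R2) = (Rp * c2m1) / (R1p * R1).
  by rewrite invf_div !mulf_div [Rp * R2]mulrC -[R2 * Rp * c2m1]mulrA [R1p * R1 * R2]mulrC canc.
have -> : ca = (ca * R1 * R1p) / (R1 * R1p) by rewrite -[ca * R1 * R1p]mulrA mulfK // mulf_neq0.
rewrite E !mulrDl -!mulrA invfM.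
congr (_ + _ + _).
- congr (c1m * _).
  rewrite [R1^-1 / R1p / R]mulrC mulrCA mulVKf // mulrCA divff // mulr1 //.
- rewrite mulrCA; congr (Rp * _); rewrite mulrCA; congr (c1m1 * _).
  rewrite invfM -!mulrA mulVKf //.
- rewrite mulrCA; congr (Rp * _); rewrite mulrCA; congr (c2m1 * _).
  rewrite invfM [R1^-1 / R1p / R]mulrC mulVKf // mulrC //.
Qed.

Lemma comb (R R1 R1p Rp ca c1m c1m1 c2m1 be : K) :
  R * be = R1p * ca - Rp * c1m1 -> Rp * c2m1 = be * R1 - c1m * R1p ->
  ca * R1 * R1p = c1m * R * R1p + R1 * Rp * c1m1 + R * Rp * c2m1.
Proof.
move=> E1 E2.
rewrite -[R * Rp * c2m1]mulrA E2 mulrBr mulrA E1 mulrBl.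
have -> : R1p * ca * R1 = ca * R1 * R1p by rewrite [R1p * ca]mulrC mulrAC.
have -> : Rp * c1m1 * R1 = R1 * Rp * c1m1 by rewrite mulrC mulrA.
have -> : R * (c1m * R1p) = c1m * R * R1p by rewrite mulrA [R * c1m]mulrC.
set a := c1m * R * R1p; set b := R1 * Rp * c1m1; set x := ca * R1 * R1p.
by rewrite [x - b - a]addrAC -[x - a - b]addrA -opprD [a + b + _]addrC subrK.
Qed.

Variable r1 : int -> K.
Hypothesis hr : forall (a : nat) (n : int), (1 <= a)%N -> rdet r1 a n != 0.

Lemma rdet0 n : rdet r1 0 n = 1.
Proof. exact: det_mx00. Qed.

Lemma rdet_nz a n : rdet r1 a n != 0.
Proof. by case: a => [|a]; [rewrite rdet0 oner_neq0 | apply: hr]. Qed.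

Lemma prod_vv a n : \prod_(1 <= i < a.+1) vv r1 i n = rdet r1 a n.
Proof.
elim: a => [|a IH]; first by rewrite big_geq // rdet0.
by rewrite big_nat_recr //= IH /vv /= mulrC divfK // rdet_nz.
Qed.

Lemma CCE a m n : CC r1 a m n = cdet r1 a m n / rdet r1 a n.
Proof. by rewrite /CC prod_vv. Qed.

Lemma cdet_out a m n : ~~ ((0 <= m) && (m <= a%:Z)) -> cdet r1 a m n = 0.
Proof. by rewrite /cdet => /negbTE ->. Qed.

Lemma yy_odd a n : yy r1 (a.*2.+1) n = vv r1 a.+1 (n + 1) / vv r1 a.+1 n.
Proof. by rewrite /yy /= odd_double /= doubleK. Qed.

Lemma yy_even a n : yy r1 (a.+1).*2 n = vv r1 a.+2 (n + 1) / vv r1 a.+1 n.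
Proof. by rewrite /yy odd_double /= doubleK. Qed.
End F.

Unset Implicit Arguments.

Theorem mainTheorem5 (K : fieldType) (r1 : int -> K)
  (hr : forall (a : nat) (n : int), (1 <= a)%N -> rdet r1 a n != 0) :
  (forall (a : nat) (m : int) (n : int), (2 <= a)%N -> 0 <= m -> m <= a%:Z ->
     CC r1 a m n = CC r1 a.-1 m n + yy r1 (2 * a).-1 n * CC r1 a.-1 (m - 1) n
                   + yy r1 (2 * a).-2 n * CC r1 a.-2 (m - 1) n)
  /\ (forall (a : nat) (n : int), CC r1 a 0 n = 1).
Proof.
split; last first.
  by move=> a n; rewrite (CCE hr) L_zero divff // (rdet_nz hr).
move=> a m n ha hm0 hma.
have [k ak] : exists k, a = k.+2 by exists a.-2; case: a ha hma => [|[|a]].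
subst a.
have -> : (2 * k.+2).-2 = (k.+1).*2 by rewrite mul2n.
have -> : (2 * k.+2).-1 = (k.+1).*2.+1 by rewrite mul2n.
rewrite yy_odd yy_even !(CCE hr) /vv /=.
have nz := rdet_nz hr.
case: m hm0 hma => [mm|mm] // _ hma.
case: mm hma => [|q] hma.
  have -> : (0%:Z - 1) = -1 :> int by [].
  rewrite (@cdet_out _ _ k.+1 (-1)) // (@cdet_out _ _ k (-1)) // !L_zero.
  apply: fin_alg => //.
  by rewrite !mulr0 !addr0 [rdet r1 k.+2 n * _]mulrC.
have -> : (q.+1)%:Z - 1 = q%:Z by rewrite -addn1 PoszD addrK.
move: hma; rewrite lez_nat => hq.
have [eq | lt] := boolP (q == k.+1).
  move/eqP: eq => ->.
  rewrite (@cdet_out _ _ k.+1 (k.+2)%:Z) ?lez_nat ?ltnn ?andbF //.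
  rewrite (@cdet_out _ _ k (k.+1)%:Z) ?lez_nat ?ltnn ?andbF //.
  rewrite L_top1 L_top2 -L_Rp -L_R1p.
  apply: fin_alg => //.
  by rewrite !mul0r !mulr0 add0r addr0 [rdet r1 k.+2 (n + 1) * _]mulrC.
have hqk : (q <= k)%N by move/eqP: lt => lt; nlia.
rewrite L_ca // L_c1m // L_c1m1 // L_c2m1 // L_R L_Rp L_R1 L_R1p.
apply: fin_alg; try by rewrite ?(L_R, L_R1, L_R1p) -?L_R -?L_R1 -?L_R1p.
apply: comb.
  apply: rel1; first exact: leq_subr.
  by rewrite -L_R.
apply: rel2; first exact: leq_subr.
by rewrite -L_Rp.
Qed.
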